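(* Let $0<a_1<a_2<\cdots<a_n$, $A_i:=a_1+\cdots+a_i$, $A_{i:j}:=\sum_{k=i}^ja_k$, and for a permutation $\pi$ of $\{1,\dots,n\}$, $A_{\pi(i)}:=a_{\pi(1)}+\cdots+a_{\pi(i)}$. Let $f$ be a positive differentiable function on $[0,\infty)$ with $0<\inf f\le\sup f<\infty$. (i) If $f$ is strictly decreasing on $[0,A_n]$, then $$\sum_{i=1}^n a_i\int_0^{A_i}f(s)\,ds<\sum_{i=1}^n a_{\pi(i)}\int_0^{A_{\pi(i)}}f(s)\,ds$$ for every permutation $\pi$ with $(\pi(1),\dots,\pi(n))\ne(1,2,\dots,n)$. (ii) If $f$ is strictly increasing on $[0,A_n]$, then $$\sum_{i=1}^n a_{n+1-i}\int_0^{A_{n+1-i:n}}f(s)\,ds<\sum_{i=1}^n a_{\pi(i)}\int_0^{A_{\pi(i)}}f(s)\,ds$$ for every permutation $\pi$ with $(\pi(1),\dots,\pi(n))\ne(n,n-1,\dots,1)$. *)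

(* Defs.v *)
From HB Require Import structures.
From mathcomp Require Import all_boot all_order all_algebra all_fingroup.
From mathcomp Require Import all_classical all_reals all_analysis.
Set Implicit Arguments. Unset Strict Implicit. Unset Printing Implicit Defensive.
Import Order.TTheory GRing.Theory Num.Theory.
Local Open Scope ring_scope.
Local Open Scope classical_set_scope.

Definition intF (R : realType) (f : R -> R) (t : R) : R :=
  Rintegral (@lebesgue_measure R) `[0, t] f.

Definition psum (R : realType) (n : nat) (a : 'I_n -> R) (s : 'I_n -> 'I_n)
  (i : 'I_n) : R := \sum_(j < n | (j <= i)%N) a (s j).

Definition wsum (R : realType) (n : nat) (a : 'I_n -> R) (f : R -> R)
  (s : 'I_n -> 'I_n) : R :=
  \sum_(i < n) a (s i) * intF f (psum a s i).

(* Main.v *)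
Require Import Defs.
From HB Require Import structures.
From mathcomp Require Import all_boot all_order all_algebra all_fingroup.
From mathcomp Require Import all_classical all_reals all_analysis.
From mathcomp Require Import zify ring lra.
Import Order.TTheory GRing.Theory Num.Theory.
Import numFieldNormedType.Exports.
Local Open Scope ring_scope.


Section Ana.
Variables (R : realType) (f : R -> R).
Hypothesis f_der : forall x, 0 <= x -> derivable f x 1.

Lemma intF_der x : 0 < x -> derivable (intF f) x 1 /\ derive1 (intF f) x = f x.
Proof.
move=> x0.
have := @continuous_FTC1_closed R f 0 x (x + 1) _ _ x0 _.
apply.
- by rewrite ltrDl.
- apply: continuous_compact_integrable; first exact: segment_compact.
  apply: derivable_within_continuous => y; rewrite in_itv /= => /andP[y0 _].
  exact: f_der.
- apply/differentiable_continuous; rewrite -derivable1_diffP.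
  by apply: f_der; rewrite ltW.
Qed.

Lemma intF_mvt a b : 0 < a -> a < b ->
  exists2 c, c \in `]a, b[ & intF f b - intF f a = f c * (b - a).
Proof.
move=> a0 ab; have [||c c1 c2] := @MVT R (intF f) f a b ab; last first.
  by exists c.
- apply: derivable_within_continuous => y; rewrite in_itv /= => /andP[ay _].
  by have [] := intF_der _ (lt_le_trans a0 ay).
- move=> x; rewrite in_itv /= => /andP[ax _].
  have [d e] := intF_der _ (lt_trans a0 ax).
  by rewrite -e derive1E; apply: derivableP.
Qed.
End Ana.


Lemma sum2n (n : nat) (F : 'I_n -> nat) (i i1 : 'I_n) : i1 != i ->
  (\sum_j F j = F i + F i1 + \sum_(j | (j != i) && (j != i1)) F j)%N.
Proof.
move=> ne; rewrite (bigD1 i) //= (bigD1 i1) //= addnA; congr (_ + _); apply: eq_bigl => j.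
Qed.

Section Sort.
Variables (R : realType) (n : nat) (W : 'S_n -> R).
Hypothesis Hsw : forall (s : 'S_n) (i i1 : 'I_n), val i1 = (val i).+1 ->
  (s i1 < s i)%N -> W (tperm i i1 * s)%g < W s.

Definition Phi (s : 'S_n) : nat := (\sum_(j < n) j * s j)%N.

Lemma Phi_bnd s : (Phi s <= n * n * n)%N.
Proof.
rewrite /Phi -mulnA -[X in (_ <= X * _)%N]card_ord -sum_nat_const.
apply: leq_sum => j _; apply: leq_mul; exact: ltnW.
Qed.

Lemma Phi_swap (s : 'S_n) (i i1 : 'I_n) : val i1 = (val i).+1 ->
  (s i1 < s i)%N -> (Phi s < Phi (tperm i i1 * s)%g)%N.
Proof.
move=> e lt.
have ne : i1 != i by apply/eqP => h; move: e; rewrite h; lia.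
rewrite /Phi [X in (_ < X)%N](reindex_inj (@perm_inj _ (tperm i i1))).
under [X in (_ < X)%N]eq_bigr => j _ do rewrite permM tpermK.
rewrite !(sum2n _ _ _ _ ne).
rewrite tpermL tpermR.
set S1 := (\sum_(j < n | _) _)%N.
set S2 := (\sum_(j < n | _) _)%N.
have -> : S2 = S1.
  apply: eq_bigr => j /andP[ji ji1]; rewrite tpermD // eq_sym //.
have e2 : nat_of_ord i1 = i.+1 := e.
rewrite e2 !mulSn; lia.
Qed.

Lemma descent (s : 'S_n) : s != 1%g ->
  exists i i1 : 'I_n, val i1 = (val i).+1 /\ (s i1 < s i)%N.
Proof.
move=> s1; apply/not_existsP => Hn; move/eqP: s1; apply.
have H : forall i i1 : 'I_n, val i1 = (val i).+1 -> (s i < s i1)%N.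
  move=> i i1 e; rewrite ltn_neqAle; apply/andP; split.
    apply/negP => /eqP /val_inj /perm_inj h; move: e; rewrite h; lia.
  rewrite leqNgt; apply/negP => h; apply: (Hn i); exists i1; split => //.
case: n s H {Hn} => [|m] s H; apply/permP => j; rewrite perm1.
  by case: j.
pose g k := val (s (inord k)).
have adj k : (k.+1 < m.+1)%N -> (g k < g k.+1)%N.
  move=> km; apply: H => /=; rewrite !inordK //; exact: ltnW.
have gd d : forall k, (k + d < m.+1)%N -> (g k + d <= g (k + d))%N.
  elim: d => [|d IH] k kd; first by rewrite !addn0.
  have kd1 : (k + d < m.+1)%N by lia.
  have kd2 : ((k + d).+1 < m.+1)%N by lia.
  have := IH k kd1; have := adj (k + d)%N kd2.
  rewrite (_ : (k + d.+1 = (k + d).+1)%N); [lia|lia].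
apply: val_inj => /=.
have gj : g j = s j by rewrite /g inord_val.
have gm : (g m < m.+1)%N by apply: ltn_ord.
have jm := ltn_ord j.
have := gd j 0%N ltac:(by rewrite add0n).
have := gd (m - j)%N j ltac:(lia).
rewrite add0n (_ : (j + (m - j))%N = m); last by lia.
rewrite -gj; lia.
Qed.

Lemma sort_le : forall s, W 1%g <= W s.
Proof.
suff H : forall k s, (n * n * n - Phi s < k)%N -> W 1%g <= W s.
  by move=> s; apply: (H (n * n * n - Phi s).+1).
elim=> [|k IH] s //.
move=> hk; have [->|s1] := eqVneq s 1%g; first by [].
have [i [i1 [e lt]]] := descent s s1.
have hp := Phi_swap s i i1 e lt; have hb := Phi_bnd (tperm i i1 * s)%g.
apply: (le_trans (IH _ _)) (ltW (Hsw s i i1 e lt)); lia.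
Qed.

Lemma sort_lt s : s != 1%g -> W 1%g < W s.
Proof.
move=> s1; have [i [i1 [e lt]]] := descent s s1.
exact: le_lt_trans (sort_le (tperm i i1 * s)%g) (Hsw s i i1 e lt).
Qed.
End Sort.


Lemma sum2r (R : realType) (n : nat) (F : 'I_n -> R) (i i1 : 'I_n) : i1 != i ->
  \sum_j F j = F i + F i1 + \sum_(j | (j != i) && (j != i1)) F j.
Proof.
move=> ne; rewrite (bigD1 i) //= (bigD1 i1) //= addrA; congr (_ + _); apply: eq_bigl => j.
Qed.

Section W.
Variables (R : realType) (n : nat) (a : 'I_n -> R) (f : R -> R).

Lemma psum_ext s1 s2 : s1 =1 s2 -> psum a s1 =1 psum a s2.
Proof. by move=> e j; apply: eq_bigr => k _; rewrite e. Qed.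

Lemma wsum_ext s1 s2 : s1 =1 s2 -> wsum a f s1 = wsum a f s2.
Proof. by move=> e; apply: eq_bigr => k _; rewrite e (psum_ext _ _ e). Qed.

Lemma psum_split s j : psum a s j = a (s j) + \sum_(k < n | (k < j)%N) a (s k).
Proof.
rewrite /psum (bigD1 j) //=; congr (_ + _); apply: eq_bigl => k.
by rewrite ltn_neqAle andbC.
Qed.

Lemma psum_other (s : 'S_n) (i i1 j : 'I_n) : val i1 = (val i).+1 -> j != i ->
  psum a (tperm i i1 * s)%g j = psum a s j.
Proof.
move=> e ji; have e2 : nat_of_ord i1 = i.+1 := e.
rewrite /psum [RHS](reindex_inj (@perm_inj _ (tperm i i1))).
apply: eq_big => k; last by rewrite permM.
have ji' : nat_of_ord j != nat_of_ord i by [].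
case: tpermP => [->|->|]; rewrite ?e2; lia.
Qed.

Lemma psum_at_i (s : 'S_n) (i i1 : 'I_n) : val i1 = (val i).+1 ->
  psum a (tperm i i1 * s)%g i = a (s i1) + \sum_(k < n | (k < i)%N) a (s k).
Proof.
move=> e; have e2 : nat_of_ord i1 = i.+1 := e.
rewrite psum_split permM tpermL; congr (_ + _); apply: eq_bigr => k ki.
rewrite permM tpermD //; apply/eqP => h; move: ki; rewrite -h ?e2; lia.
Qed.

Lemma psum_at_i1 (s : 'S_n) (i i1 : 'I_n) : val i1 = (val i).+1 ->
  psum a s i1 = a (s i1) + (a (s i) + \sum_(k < n | (k < i)%N) a (s k)).
Proof.
move=> e; have e2 : nat_of_ord i1 = i.+1 := e.
rewrite psum_split; congr (_ + _); rewrite -psum_split /psum; apply: eq_bigl => k.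
by rewrite e2 ltnS.
Qed.

Lemma wsum_swap (s : 'S_n) (i i1 : 'I_n) : val i1 = (val i).+1 ->
  let P := \sum_(k < n | (k < i)%N) a (s k) in
  let x := a (s i) in let y := a (s i1) in
  wsum a f s - wsum a f (tperm i i1 * s)%g =
  (x * intF f (x + P) + y * intF f (y + (x + P))) -
  (y * intF f (y + P) + x * intF f (y + (x + P))).
Proof.
move=> e P x y.
have ne : i1 != i by apply/eqP => h; move: e; rewrite h; lia.
rewrite /wsum !(sum2r _ _ _ _ _ ne).
set S1 := \sum_(j < n | _) _.
set S2 := \sum_(j < n | _) _.
have -> : S2 = S1.
  apply: eq_bigr => j /andP[ji ji1].
  rewrite psum_other // permM tpermD // eq_sym //.
rewrite (psum_at_i s i i1 e) (psum_other s i i1 i1 e ne) (psum_at_i1 s i i1 e) (psum_split s i).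
rewrite !permM tpermL tpermR -/P -/x -/y.
ring.
Qed.
End W.

Section Core.
Variables (R : realType) (f : R -> R).
Hypothesis f_der : forall x, 0 <= x -> derivable f x 1.

Lemma core P x y : 0 <= P -> 0 < y -> y < x ->
  exists c1 c2, [/\ 0 < c1, c1 < c2, c2 < y + (x + P) &
   (x * intF f (x + P) + y * intF f (y + (x + P))) -
   (y * intF f (y + P) + x * intF f (y + (x + P))) = y * (x - y) * (f c1 - f c2)].
Proof.
move=> P0 y0 yx.
have h1 : 0 < y + P by lra.
have h2 : y + P < x + P by lra.
have h3 : 0 < x + P by lra.
have h4 : x + P < y + (x + P) by lra.
have [c1 c1i e1] := intF_mvt _ _ f_der _ _ h1 h2.
have [c2 c2i e2] := intF_mvt _ _ f_der _ _ h3 h4.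
move: c1i c2i; rewrite !in_itv /= => /andP[c1a c1b] /andP[c2a c2b].
exists c1, c2; split.
- lra.
- lra.
- lra.
have ex : intF f (x + P) = f c1 * (x + P - (y + P)) + intF f (y + P).
  by rewrite -e1 subrK.
have eQ : intF f (y + (x + P)) = f c2 * (y + (x + P) - (x + P)) + intF f (x + P).
  by rewrite -e2 subrK.
rewrite eQ ex; ring.
Qed.
End Core.

Lemma psum_le_sum (R : realType) (n : nat) (a : 'I_n -> R) (s : 'S_n) j :
  (forall i, 0 < a i) -> psum a s j <= \sum_(i < n) a i.
Proof.
move=> a_pos.
rewrite (reindex_inj (@perm_inj _ s)) /psum [X in _ <= X](bigID (fun k : 'I_n => (k <= j)%N)) /=.
rewrite lerDl; apply: sumr_ge0 => k _; exact: ltW.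
Qed.

Lemma P_ge0 (R : realType) (n : nat) (a : 'I_n -> R) (s : 'S_n) (i : 'I_n) :
  (forall i, 0 < a i) -> 0 <= \sum_(k < n | (k < i)%N) a (s k).
Proof. by move=> a_pos; apply: sumr_ge0 => k _; exact: ltW. Qed.

Theorem lemma3 (R : realType) (n : nat) (a : 'I_n -> R) (f : R -> R)
  (a_pos : forall i, 0 < a i)
  (a_incr : forall i j : 'I_n, (i < j)%N -> a i < a j)
  (f_pos : forall x, 0 <= x -> 0 < f x)
  (f_der : forall x, 0 <= x -> derivable f x 1)
  (f_bnd : exists m M : R, 0 < m /\ forall x, 0 <= x -> m <= f x <= M) :
  let An := \sum_(i < n) a i in
  ((forall x y, 0 <= x -> x < y -> y <= An -> f y < f x) ->
    forall pi : 'S_n, ~ (forall i, pi i = i) ->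
      wsum a f id < wsum a f pi) /\
  ((forall x y, 0 <= x -> x < y -> y <= An -> f x < f y) ->
    forall pi : 'S_n, ~ (forall i, pi i = rev_ord i) ->
      wsum a f (@rev_ord n) < wsum a f pi).
Proof.
move=> An.
have Qle : forall (s : 'S_n) (i i1 : 'I_n), val i1 = (val i).+1 ->
    a (s i1) + (a (s i) + \sum_(k < n | (k < i)%N) a (s k)) <= An.
  move=> s i i1 e; rewrite -(psum_at_i1 _ _ a s i i1 e).
  exact: psum_le_sum.
split.
- move=> hdec pi hpi.
  pose W (s : 'S_n) := wsum a f s.
  have Hsw : forall (s : 'S_n) (i i1 : 'I_n), val i1 = (val i).+1 ->
      (s i1 < s i)%N -> W (tperm i i1 * s)%g < W s.
    move=> s i i1 e lt; rewrite -subr_gt0 /W (wsum_swap _ _ a f s i i1 e) /=.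
    have yx := a_incr _ _ lt.
    have Q := Qle s i i1 e.
    have P0 := P_ge0 _ _ a s i a_pos.
    have [c1 [c2 [c10 c12 c2Q ->]]] := core _ _ f_der _ _ _ P0 (a_pos (s i1)) yx.
    apply: mulr_gt0; first by apply: mulr_gt0 => //; rewrite subr_gt0.
    rewrite subr_gt0; apply: hdec => //; first exact: ltW.
    exact: le_trans (ltW c2Q) Q.
  have pi1 : pi != 1%g by apply/eqP => h; apply: hpi => i; rewrite h perm1.
  have := sort_lt _ _ W Hsw pi pi1.
  by rewrite /W (wsum_ext _ _ a f _ id (fun i => perm1 i)).
- move=> hinc pi hpi.
  pose r := perm (@rev_ord_inj n).
  pose W (t : 'S_n) := wsum a f (t * r)%g.
  have Hsw : forall (t : 'S_n) (i i1 : 'I_n), val i1 = (val i).+1 ->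
      (t i1 < t i)%N -> W (tperm i i1 * t)%g < W t.
    move=> t i i1 e lt; rewrite -subr_gt0 /W -mulgA.
    set s := (t * r)%g.
    rewrite (wsum_swap _ _ a f s i i1 e) /=.
    have lt' : (s i < s i1)%N.
      rewrite /s !permM !permE /=.
      have := ltn_ord (t i); have := ltn_ord (t i1); lia.
    have xy := a_incr _ _ lt'.
    have Q := Qle s i i1 e.
    have P0 := P_ge0 _ _ a s i a_pos.
    have [c1 [c2 [c10 c12 c2Q E]]] :=
      core _ _ f_der _ _ _ P0 (a_pos (s i)) xy.
    set x := a (s i) in E Q xy c2Q *; set y := a (s i1) in E Q xy c2Q *.
    set P := \sum_(k < n | _) _ in E Q P0 c2Q *.
    have hQ : x + (y + P) = y + (x + P) by ring.
    rewrite hQ in E; rewrite hQ in c2Q.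
    have h : 0 < x * (y - x) * (f c2 - f c1).
      apply: mulr_gt0; first by apply: mulr_gt0; [exact: a_pos | rewrite subr_gt0].
      rewrite subr_gt0; apply: hinc => //; first exact: ltW.
      exact: le_trans (ltW c2Q) Q.
    rewrite addrC; lra.
  have pi1 : (pi * r^-1)%g != 1%g.
    apply/eqP => h; apply: hpi => i.
    have -> : pi = r by rewrite -(mulgKV r pi) h mul1g.
    by rewrite permE.
  have := sort_lt _ _ W Hsw _ pi1.
  rewrite /W mulgKV mul1g => H; apply: le_lt_trans H.
  by rewrite (wsum_ext _ _ a f _ (@rev_ord n) (fun i => permE _ i)).
Qed.
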